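(* Let $G$ be a threshold graph with binary string $b=0^{s_1}1^{t_1}\cdots0^{s_k}1^{t_k}$ (all $s_i,t_i\geq1$), and for each $i\in\{1,\ldots,k\}$ let $\sigma_i=\sum_{j=1}^i s_j$ and $\tau_i=\sum_{j=i}^k t_j$. Then \[ \max_{1\leq i\leq k}\left\{\frac{(\tau_i-1)+\sqrt{(\tau_i-1)^2+4\tau_i\sigma_i}}{2}\right\}\leq\lambda_{\max}(G) \] and \[ \lambda_{\min}(G)\leq\min_{1\leq i\leq k}\left\{\frac{(\tau_i-1)-\sqrt{(\tau_i-1)^2+4\tau_i\sigma_i}}{2}\right\}. \]
   Context: $\lambda_{\max}(G)$ and $\lambda_{\min}(G)$ denote the largest and smallest eigenvalues of the $(0,1)$-adjacency matrix of $G$. Threshold graphs from binary strings: given $b=b_1\cdots b_n\in\{0,1\}^n$ with $b_1=0$, start with a single vertex and for $j=2,\ldots,n$ add a new vertex adjacent to all previous vertices if $b_j=1$ and isolated if $b_j=0$; the result is $G(b)$, and $b$ is its binary string. $0^s$ (resp. $1^t$) denotes $s$ consecutive zeros (resp. $t$ consecutive ones). *)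

(* Defs.v *)
From HB Require Import structures.
From mathcomp Require Import all_boot all_order all_algebra.
From mathcomp Require Import reals.
Set Implicit Arguments. Unset Strict Implicit. Unset Printing Implicit Defensive.
Import Order.TTheory GRing.Theory Num.Theory.
Local Open Scope ring_scope.

(* Binary string 0^{s_1}1^{t_1}...0^{s_k}1^{t_k}; false = 0, true = 1.
   s and t are the (0-indexed) lists (s_1,...,s_k), (t_1,...,t_k). *)
Definition thr_string (s t : seq nat) : seq bool :=
  flatten [seq nseq p.1 false ++ nseq p.2 true | p <- zip s t].

(* Threshold graph G(b): vertices 0..n-1 (vertex j is the (j+1)-th added);
   for i < j, i ~ j iff b_j = 1 (vertex j is dominating when added).
   Its (0,1)-adjacency matrix over a real field R. *)
Definition thr_adj (R : realType) (b : seq bool) : 'M[R]_(size b) :=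
  \matrix_(i, j) (if i != j then (nth false b (maxn i j))%:R else 0).

Definition is_lambda_max (R : realType) n (A : 'M[R]_n) (lam : R) : Prop :=
  eigenvalue A lam /\ (forall mu, eigenvalue A mu -> mu <= lam).
Definition is_lambda_min (R : realType) n (A : 'M[R]_n) (lam : R) : Prop :=
  eigenvalue A lam /\ (forall mu, eigenvalue A mu -> lam <= mu).

(* sigma_i and tau_i for 0-indexed i (i.e. paper's index i+1) *)
Definition thr_sigma (s : seq nat) (i : nat) : nat := \sum_(j < i.+1) nth 0%N s j.
Definition thr_tau (t : seq nat) (i : nat) : nat := \sum_(i <= j < size t) nth 0%N t j.

(* Main.v *)
Require Import Defs.
From HB Require Import structures.
From mathcomp Require Import all_boot all_order all_algebra.
From mathcomp Require Import reals.
From mathcomp Require Import complex ring.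
Import Order.TTheory GRing.Theory Num.Theory.
Local Open Scope ring_scope.

Lemma ex_argmax {T : finType} {R : realDomainType} (i0 : T) (F : T -> R) :
  exists i, forall j, F j <= F i.
Proof.
have := @real_arg_maxP R T i0 predT F isT (fun i _ => num_real (F i)).
by case=> i _ H; exists i => j; exact: H.
Qed.

Lemma ex_argmin {T : finType} {R : realDomainType} (i0 : T) (F : T -> R) :
  exists i, forall j, F i <= F j.
Proof.
have [i Hi] := ex_argmax i0 (fun j => - F j : R).
by exists i => j; rewrite -lerN2; exact: Hi.
Qed.

Section Spec.
Variable R : rcfType.
Local Notation C := (complex R).
Local Notation f := (real_complex R).

Lemma f_real (x : R) : f x \is Num.real.
Proof. by rewrite complex_real. Qed.

Lemma f_conj (x : R) : (f x)^* = f x.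
Proof. exact/conj_Creal/f_real. Qed.

Lemma sym_spec n (A : 'M[R]_n) : (0 < n)%N -> A^T = A ->
  exists lmax lmin : R, [/\ eigenvalue A lmax, eigenvalue A lmin,
    (forall v : 'rV_n, (v *m A *m v^T) 0 0 <= lmax * (v *m v^T) 0 0) &
    (forall v : 'rV_n, lmin * (v *m v^T) 0 0 <= (v *m A *m v^T) 0 0)].
Proof.
move=> n0 AT.
pose Ac := map_mx f A.
have Areal : Ac \is a realmx by apply/mxOverP => i j; rewrite mxE f_real.
have Asym : Ac \is symmetricmx.
  apply/is_hermitianmxP; rewrite expr0 scale1r.
  by apply/matrixP => i j; rewrite !mxE /= -{1}AT mxE.
have Aherm := realsym_hermsym Asym Areal.
have Anorm := hermitian_normalmx Aherm.
have dreal := hermitian_spectral_diag_real Aherm.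
set P := spectralmx Ac; set d := spectral_diag Ac.
have Pu : P \is unitarymx := spectral_unitarymx Ac.
have HA : Ac = (P ^t*)%sesqui *m diag_mx d *m P.
  by rewrite -invmx_unitary //; exact/orthomx_spectralP.
have PPt : P *m (P ^t*)%sesqui = 1%:M by apply/unitarymxP.
have PtP : (P ^t*)%sesqui *m P = 1%:M.
  by rewrite -invmx_unitary // mulVmx // unitarymx_unit.
pose g i := complex.Re (d 0 i).
have dg i : d 0 i = f (g i) by rewrite /g RRe_real // (mxOverP dreal).
have eig i : eigenvalue A (g i).
  rewrite eigenvalue_root_char -(fmorph_root f) map_char_poly.
  rewrite -eigenvalue_root_char.
  suff H : eigenvalue Ac (d 0 i) by move: H; rewrite dg.
  apply/eigenvalueP; exists (row i P).
    rewrite HA !mulmxA -row_mul PPt -row_mul mul1mx -row_mul.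

    apply/rowP=> j; rewrite !mxE (bigD1 i) //= big1 ?addr0.
      by rewrite !mxE eqxx mulr1n.
    by move=> k /negbTE nk; rewrite !mxE eq_sym nk mulr0n mul0r.
  apply/eqP => H.
  have := congr1 (fun M => (M *m (P ^t*)%sesqui) 0 i) H.
  by rewrite /= -row_mul PPt mul0mx !mxE eqxx /= => /eqP; rewrite oner_eq0.
have key u : (u *m Ac *m (u ^t*)%sesqui) 0 0 =
   \sum_j d 0 j * ((u *m (P ^t*)%sesqui) 0 j * ((u *m (P ^t*)%sesqui) 0 j)^*) /\
   (u *m (u ^t*)%sesqui) 0 0 =
   \sum_j ((u *m (P ^t*)%sesqui) 0 j * ((u *m (P ^t*)%sesqui) 0 j)^*).
  set w := u *m (P ^t*)%sesqui.
  have wt : (w ^t*)%sesqui = P *m (u ^t*)%sesqui.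
    by rewrite /w trmx_mul map_mxM trmxCK.
  split.
    rewrite HA !mulmxA -/w.
    rewrite -(mulmxA _ P) -wt mul_mx_diag mxE.
    by apply: eq_bigr => j _; rewrite !mxE mulrCA mulrA.
  rewrite -{1}[u]mulmx1 -PtP mulmxA -/w -mulmxA -wt mxE.
  by apply: eq_bigr => j _; rewrite !mxE.
have tr (v : 'rV[R]_n) :
  f ((v *m A *m v^T) 0 0) = ((map_mx f v) *m Ac *m ((map_mx f v) ^t*)%sesqui) 0 0 /\
  f ((v *m v^T) 0 0) = ((map_mx f v) *m ((map_mx f v) ^t*)%sesqui) 0 0.
  have -> : ((map_mx f v) ^t*)%sesqui = map_mx f v^T.
    by apply/matrixP => i j; rewrite !mxE f_conj.
  by split; rewrite -!map_mxM [RHS]mxE.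
have fM (x y : R) : f (x * y) = f x * f y by exact: rmorphM.
have [imax Hmax] := ex_argmax (Ordinal n0) g.
have [imin Hmin] := ex_argmin (Ordinal n0) g.
exists (g imax), (g imin); split => // v.
  rewrite -lecR fM; case: (tr v) => -> ->.
  case: (key _ (map_mx f v)) => -> ->.
  rewrite mulr_sumr; apply: ler_sum => j _; rewrite dg.
  by apply: ler_wpM2r; [exact: mul_conjC_ge0 | rewrite lecR].
rewrite -lecR fM; case: (tr v) => -> ->.
case: (key _ (map_mx f v)) => -> ->.
rewrite mulr_sumr; apply: ler_sum => j _; rewrite dg.
by apply: ler_wpM2r; [exact: mul_conjC_ge0 | rewrite lecR].
Qed.
End Spec.

Lemma sum_take_count (b : seq bool) (a : pred bool) (P : nat) :
  (\sum_(0 <= p < size b) ((p < P)%N && a (nth false b p)) = count a (take P b))%N.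
Proof.
elim: b P => [|x b IH] P; first by rewrite big_geq.
rewrite /= big_nat_recl //= ; case: P => [|P].
  by rewrite /= big1_seq.
by rewrite /= IH.
Qed.

Lemma sum_count (b : seq bool) (a : pred bool) :
  (\sum_(0 <= p < size b) a (nth false b p) = count a b)%N.
Proof.
rewrite -[count a b](congr1 (count a) (take_size b)) -sum_take_count.
by apply: eq_big_nat => p /andP[_ ->].
Qed.

Lemma sum_drop_count (b : seq bool) (a : pred bool) (P : nat) :
  (\sum_(0 <= p < size b) ((P <= p)%N && a (nth false b p)) = count a (drop P b))%N.
Proof.
elim: b P => [|x b IH] P; first by rewrite big_geq.
rewrite /= big_nat_recl //= ; case: P => [|P].
  by rewrite /= -sum_count; congr (_ + _)%N.
by rewrite /= IH.
Qed.

Section Quad.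
Variable R : realType.

Definition xval (b : seq bool) (P : nat) (t th : R) (p : nat) : R :=
  if (p < P)%N && ~~ nth false b p then t
  else if (P <= p)%N && nth false b p then th else 0.

Definition aval (b : seq bool) (p q : nat) : R :=
  if p != q then (nth false b (maxn p q))%:R else 0.

Lemma ptZ b P (p q : nat) (t th : R) : (q < P)%N -> ~~ nth false b q ->
  xval b P t th p * aval b p q = th * ((P <= p)%N && nth false b p)%:R.
Proof.
move=> hq bq; rewrite /xval /aval.
case: (ltngtP p q) => hpq /=.
- rewrite (negbTE bq) /= mulr0 (leqNgt P p) (ltn_trans hpq hq) /=.
  by rewrite !mulr0.
- case: (ltnP p P) => hp; case: (nth false b p) => /=; by rewrite ?mulr0 ?mul0r ?mulr1.
- subst; rewrite (leqNgt P q) hq /=; by rewrite !mulr0.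
Qed.

Lemma ptO b P (p q : nat) (t th : R) : (P <= q)%N -> nth false b q ->
  xval b P t th p * aval b p q =
  t * ((p < P)%N && ~~ nth false b p)%:R + th * ((P <= p)%N && nth false b p)%:R
  - th * (p == q)%:R.
Proof.
move=> hq bq; rewrite /xval /aval.
case: (ltngtP p q) => hpq /=.
- rewrite bq /=.
  case: (ltnP p P) => hp; case: (nth false b p) => /=; by rewrite ?mulr0 ?mul0r ?mulr1 ?subr0 ?addr0 ?add0r.
- have hp : (P <= p)%N by apply: leq_trans hq (ltnW hpq).
  rewrite hp ltnNge hp /=.
  case: (nth false b p) => /=; by rewrite ?mulr0 ?mul0r ?mulr1 ?subr0 ?addr0 ?add0r.
- subst; rewrite bq ltnNge hq /=; by rewrite !mulr0 add0r subrr.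
Qed.

Lemma sum_ord_take b (a : pred bool) P :
  \sum_(p < size b) (((p < P)%N && a (nth false b p))%:R : R) = (count a (take P b))%:R.
Proof. by rewrite -sum_take_count big_mkord natr_sum. Qed.

Lemma sum_ord_drop b (a : pred bool) P :
  \sum_(p < size b) (((P <= p)%N && a (nth false b p))%:R : R) = (count a (drop P b))%:R.
Proof. by rewrite -sum_drop_count big_mkord natr_sum. Qed.

Lemma quad_bound b P (th : R) : (P <= size b)%N ->
  (0 < count negb (take P b))%N -> (0 < count id (drop P b))%N ->
  th ^+ 2 = ((count id (drop P b))%:R - 1) * th +
            (count id (drop P b))%:R * (count negb (take P b))%:R ->
  exists x : 'rV[R]_(size b), x != 0 /\
    (x *m thr_adj R b *m x^T) 0 0 = th * (x *m x^T) 0 0.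
Proof.
set sg := count negb (take P b); set tu := count id (drop P b).
move=> hP hs ht hth.
pose x := \row_(p < size b) xval b P tu%:R th p.
have Aent (p q : 'I_(size b)) : thr_adj R b p q = aval b p q by rewrite mxE.
exists x; split.
  have : has negb (take P b) by rewrite has_count.
  case/hasP => y yin ny; case/(nthP false): yin => p hp hnth.
  have hpP : (p < P)%N by rewrite size_takel in hp.
  have hpb : (p < size b)%N by apply: leq_trans hpP hP.
  rewrite nth_take // in hnth.
  apply/eqP => /rowP /(_ (Ordinal hpb)); rewrite !mxE /xval /= hpP hnth ny /=.
  by move/eqP; rewrite pnatr_eq0 => /eqP h; move: ht; rewrite -/tu h.
rewrite !mxE mulr_sumr; apply: eq_bigr => q _.
rewrite !mxE.
under eq_bigr => p _ do rewrite !mxE -/(aval b p q).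
case hZ: ((q < P)%N && ~~ nth false b q).
  case/andP: hZ => hq bq.
  under eq_bigr => p _ do rewrite ptZ //.
  rewrite -mulr_sumr (sum_ord_drop b id P) -/tu /xval hq bq /=.
  by rewrite mulrA.
case hO: ((P <= q)%N && nth false b q).
  case/andP: hO => hq bq.
  under eq_bigr => p _ do rewrite ptO //.
  rewrite !big_split /= -!mulr_sumr (sum_ord_drop b id P) (sum_ord_take b negb P) -/tu -/sg.
  have s1 : \sum_(i < size b) ((i == q)%:R : R) = 1.
    by rewrite (bigD1 q) //= eqxx big1 ?addr0 // => i /negbTE ->.
  rewrite sumrN -mulr_sumr s1 mulr1.
  rewrite /xval hq bq ltnNge hq /=.
  rewrite mulrA -expr2 hth; congr (_ * _); ring.
by rewrite /xval hZ hO !mulr0.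
Qed.
End Quad.

Lemma thr_cons x y s t :
  thr_string (x :: s) (y :: t) = nseq x false ++ nseq y true ++ thr_string s t.
Proof. by rewrite /thr_string /= catA. Qed.

Lemma count_thr_neg s t : size s = size t -> count negb (thr_string s t) = sumn s.
Proof.
elim: s t => [|x s IH] [|y t] //= [] e.
by rewrite thr_cons !count_cat !count_nseq IH //= mul1n mul0n.
Qed.

Lemma count_thr_id s t : size s = size t -> count id (thr_string s t) = sumn t.
Proof.
elim: s t => [|x s IH] [|y t] //= [] e.
by rewrite thr_cons !count_cat !count_nseq IH //= mul1n mul0n.
Qed.

Lemma thr_split s t i : size s = size t -> (i < size s)%N ->
  thr_string s t = (thr_string (take i s) (take i t) ++ nseq (nth 0%N s i) false)
     ++ (nseq (nth 0%N t i) true ++ thr_string (drop i.+1 s) (drop i.+1 t)).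
Proof.
elim: i s t => [|i IH] [|x s] [|y t] //= [] e hi.
  by rewrite thr_cons !drop0.
by rewrite !thr_cons (IH s t e hi) !catA.
Qed.

Lemma sum_ord_nth m s : (\sum_(j < m) nth 0%N s j = sumn (take m s))%N.
Proof.
elim: m s => [|m IH] s; first by rewrite big_ord0 take0.
rewrite big_ord_recl; case: s => [|x s] /=.
  by rewrite big1 // => j _; rewrite nth_nil.
by rewrite IH.
Qed.

Lemma sigmaE s i : (i < size s)%N -> thr_sigma s i = (sumn (take i s) + nth 0%N s i)%N.
Proof.
by move=> hi; rewrite /thr_sigma sum_ord_nth (take_nth 0%N hi) -cats1 sumn_cat /= addn0.
Qed.

Lemma tauE t i : (i < size t)%N -> thr_tau t i = (nth 0%N t i + sumn (drop i.+1 t))%N.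
Proof.
move=> hi; rewrite /thr_tau.
have : (\sum_(0 <= j < size t) nth 0%N t j = \sum_(0 <= j < i) nth 0%N t j + \sum_(i <= j < size t) nth 0%N t j)%N.
  by rewrite -big_cat_nat // ltnW.
rewrite !big_mkord !sum_ord_nth take_size.
rewrite -{1}(cat_take_drop i t) sumn_cat => /addnI <-.
by rewrite (drop_nth 0%N hi).
Qed.

Lemma vv_gt0 (R : realDomainType) n (v : 'rV[R]_n) : v != 0 -> 0 < (v *m v^T) 0 0.
Proof.
move=> nz; rewrite mxE.
have ge j : 0 <= v 0 j * v^T j 0 by rewrite mxE -expr2 sqr_ge0.
rewrite lt_def sumr_ge0 ?andbT //; apply: contra nz => /eqP H.
apply/eqP/rowP => j; rewrite mxE.
have := psumr_eq0P (fun j _ => ge j) H (i := j) isT.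
by rewrite mxE => /eqP; rewrite mulf_eq0 orbb => /eqP.
Qed.

Lemma lam_exist (R : realType) n (A : 'M[R]_n) : (0 < n)%N -> A^T = A ->
  exists lmax lmin : R, [/\ is_lambda_max A lmax, is_lambda_min A lmin,
    (forall v : 'rV_n, (v *m A *m v^T) 0 0 <= lmax * (v *m v^T) 0 0) &
    (forall v : 'rV_n, lmin * (v *m v^T) 0 0 <= (v *m A *m v^T) 0 0)].
Proof.
move=> n0 AT; have [lmax [lmin [e1 e2 h1 h2]]] := @sym_spec R n A n0 AT.
exists lmax, lmin; split => //.
- split => // mu /eigenvalueP [v hv nz].
  have E : (v *m A *m v^T) 0 0 = mu * (v *m v^T) 0 0 by rewrite hv -scalemxAl [LHS]mxE.
  by have := h1 v; rewrite E ler_pM2r // (@vv_gt0 _ _ _ nz).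
- split => // mu /eigenvalueP [v hv nz].
  have E : (v *m A *m v^T) 0 0 = mu * (v *m v^T) 0 0 by rewrite hv -scalemxAl [LHS]mxE.
  by have := h2 v; rewrite E ler_pM2r // (@vv_gt0 _ _ _ nz).
Qed.

Lemma blocks (s t : seq nat) i : size s = size t -> (i < size s)%N ->
  exists P, [/\ (P <= size (thr_string s t))%N,
     count negb (take P (thr_string s t)) = thr_sigma s i &
     count id (drop P (thr_string s t)) = thr_tau t i].
Proof.
move=> e hi; have hit : (i < size t)%N by rewrite -e.
set B1 := thr_string (take i s) (take i t) ++ nseq (nth 0%N s i) false.
exists (size B1); rewrite (thr_split s t i e hi) -/B1 take_size_cat // drop_size_cat //.
have et : size (take i s) = size (take i t) by rewrite !size_take e.
split.
- by rewrite size_cat leq_addr.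
- by rewrite count_cat count_thr_neg // count_nseq /= mul1n sigmaE.
- rewrite count_cat count_thr_id ?count_nseq /= ?mul1n ?tauE //.
  by rewrite !size_drop e.
Qed.

Lemma theta_eq (R : realType) (sg tu : R) (pm : bool) : 0 <= sg -> 0 <= tu ->
  let th := ((tu - 1) + (-1) ^+ pm * Num.sqrt ((tu - 1) ^+ 2 + 4 * tu * sg)) / 2 in
  th ^+ 2 = (tu - 1) * th + tu * sg.
Proof.
move=> hs ht th.
set D := (tu - 1) ^+ 2 + 4 * tu * sg.
have hD : 0 <= D by rewrite addr_ge0 ?sqr_ge0 // !mulr_ge0.
have r2 : Num.sqrt D ^+ 2 = D by rewrite sqr_sqrtr.
have e2 : ((-1) ^+ pm) ^+ 2 = 1 :> R by case: (pm); rewrite ?expr1 ?expr0 ?expr1n // sqrrN expr1n.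
apply/eqP; rewrite -subr_eq0; apply/eqP.
transitivity ((((-1) ^+ pm) ^+ 2 * Num.sqrt D ^+ 2 - D) / (4 : R)).
  by rewrite /th /D; field.
by rewrite e2 mul1r r2 subrr mul0r.
Qed.

Theorem theorem5p2 (R : realType) (k : nat) (s t : seq nat) :
  (0 < k)%N -> size s = k -> size t = k ->
  all (fun x => 0 < x)%N s -> all (fun x => 0 < x)%N t ->
  (exists lmax : R, is_lambda_max (thr_adj R (thr_string s t)) lmax /\
     forall i, (i < k)%N ->
       let sg := (thr_sigma s i)%:R : R in
       let tu := (thr_tau t i)%:R : R in
       ((tu - 1) + Num.sqrt ((tu - 1) ^+ 2 + 4 * tu * sg)) / 2 <= lmax) /\
  (exists lmin : R, is_lambda_min (thr_adj R (thr_string s t)) lmin /\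
     forall i, (i < k)%N ->
       let sg := (thr_sigma s i)%:R : R in
       let tu := (thr_tau t i)%:R : R in
       lmin <= ((tu - 1) - Num.sqrt ((tu - 1) ^+ 2 + 4 * tu * sg)) / 2).
Proof.
move=> k0 hs ht ps pt.
set b := thr_string s t.
have est : size s = size t by rewrite hs ht.
have pos i : (i < k)%N -> (0 < thr_sigma s i)%N /\ (0 < thr_tau t i)%N.
  move=> hi; rewrite sigmaE ?hs // tauE ?ht //.
  have ps' : (0 < nth 0%N s i)%N by apply: (allP ps); rewrite mem_nth // hs.
  have pt' : (0 < nth 0%N t i)%N by apply: (allP pt); rewrite mem_nth // ht.
  by rewrite !addn_gt0 ps' pt' orbT.
have n0 : (0 < size b)%N.
  have [P [hP hc _]] := blocks s t 0 est (ltac:(by rewrite hs)).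
  have := (pos 0%N k0).1; rewrite -hc => h.
  apply: leq_trans h (leq_trans (count_size _ _) _).
  by rewrite size_takel.
have sym : (thr_adj R b)^T = thr_adj R b.
  by apply/matrixP => i j; rewrite !mxE eq_sym maxnC.
have [lmax [lmin [Hmax Hmin H1 H2]]] := @lam_exist _ _ _ n0 sym.
have bound i (pm : bool) : (i < k)%N -> exists x : 'rV[R]_(size b), x != 0 /\
   (x *m thr_adj R b *m x^T) 0 0 =
   (((thr_tau t i)%:R - 1) + (-1) ^+ pm * Num.sqrt (((thr_tau t i)%:R - 1) ^+ 2 +
      4 * (thr_tau t i)%:R * (thr_sigma s i)%:R)) / 2 * (x *m x^T) 0 0.
  move=> hi; have [P [hP hc hd]] := blocks s t i est (ltac:(by rewrite hs)).
  have [p1 p2] := pos i hi.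
  apply: (@quad_bound R b P); rewrite ?hc ?hd //.
  exact: (@theta_eq R _ _ pm (ler0n _ _) (ler0n _ _)).
split.
  exists lmax; split => // i hi /=.
  have [x [nz hx]] := bound i false hi.
  have := H1 x; rewrite hx ler_pM2r; last exact: vv_gt0.
  by rewrite expr0 mul1r.
exists lmin; split => // i hi /=.
have [x [nz hx]] := bound i true hi.
have := H2 x; rewrite hx ler_pM2r; last exact: vv_gt0.
by rewrite expr1 mulN1r.
Qed.
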